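(* Let $\alpha\in[0,1]$, $m\ge1$, $n_1,n_2\ge3$, and let $H_1$ be a graph on $n-n_1-n_2$ vertices. Let $H'=C_{n_1}\cup C_{n_2}\cup H_1$ and $H''=C_{n_1+n_2}\cup H_1$. Then $\lambda_1(A_\alpha(K_m\vee H'))=\lambda_1(A_\alpha(K_m\vee H''))$.
   Context: All graphs are finite, simple and undirected. $A_\alpha(G)=\alpha D(G)+(1-\alpha)A(G)$ with $A(G)$ the adjacency and $D(G)$ the degree matrix; $\lambda_1$ denotes the largest eigenvalue. $C_k$ is the cycle on $k$ vertices, $\cup$ disjoint union, $K_m$ the complete graph, and $\vee$ the join (disjoint union plus all edges between the two vertex sets). *)

(* Defs.v *)
From HB Require Import structures.
From mathcomp Require Import all_boot all_order all_algebra.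
Set Implicit Arguments. Unset Strict Implicit. Unset Printing Implicit Defensive.
Import Order.TTheory GRing.Theory Num.Theory.
Local Open Scope ring_scope.

Definition simple_graph (n : nat) (e : rel 'I_n) : Prop :=
  (forall i j, e i j = e j i) /\ (forall i, e i i = false).

(* Cycle C_n on 'I_n : i ~ i+1 (mod n). For n >= 3 this is the n-cycle. *)
Definition cycle_graph (n : nat) : rel 'I_n :=
  fun i j => (val j == (val i).+1 %% n)%N || (val i == (val j).+1 %% n)%N.

Definition complete_graph (m : nat) : rel 'I_m := fun i j => i != j.

(* Disjoint union G1 ∪ G2 on 'I_(a + b): first a vertices are G1, rest G2. *)
Definition union_graph (a b : nat) (e1 : rel 'I_a) (e2 : rel 'I_b) : rel 'I_(a + b) :=
  fun i j => match split i, split j with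
             | inl x, inl y => e1 x y
             | inr x, inr y => e2 x y
             | _, _ => false
             end.

Definition join_graph (a b : nat) (e1 : rel 'I_a) (e2 : rel 'I_b) : rel 'I_(a + b) :=
  fun i j => match split i, split j with
             | inl x, inl y => e1 x y
             | inr x, inr y => e2 x y
             | _, _ => true
             end.

Definition adj_mx (R : pzRingType) (n : nat) (e : rel 'I_n) : 'M[R]_n :=
  \matrix_(i, j) (e i j)%:R.

Definition deg_mx (R : pzRingType) (n : nat) (e : rel 'I_n) : 'M[R]_n :=
  \matrix_(i, j) (if i == j then (\sum_(k < n) (e i k)%:R) else 0).

Definition A_alpha (R : pzRingType) (n : nat) (alpha : R) (e : rel 'I_n) : 'M[R]_n :=
  alpha *: deg_mx R e + (1 - alpha) *: adj_mx R e.

Definition is_lambda1 (R : realFieldType) (n : nat) (M : 'M[R]_n) (x : R) : Prop :=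
  eigenvalue M x /\ (forall y : R, eigenvalue M y -> y <= x).

Arguments cycle_graph n : clear implicits.
Arguments complete_graph m : clear implicits.

(* Main.v *)
Require Import Defs.
From HB Require Import structures.
From mathcomp Require Import all_boot all_order all_algebra.
From mathcomp Require Import ring lra zify.
From mathcomp Require Import sesquilinear spectral.
From mathcomp.real_closed Require Import complex.
Import Order.TTheory GRing.Theory Num.Theory.
Local Open Scope ring_scope.
Section Spec.
Local Open Scope sesquilinear_scope.

Lemma conj_realC (R : rcfType) (x : R) : ((x%:C)%C : R[i])^* = (x%:C)%C.
Proof. exact: conjc_real. Qed.

Lemma top_eig (R : rcfType) n (M : 'M[R]_n) : (0 < n)%N -> M^T = M ->
  exists2 l, eigenvalue M l &
    forall u : 'rV_n, (u *m M *m u^T) 0 0 <= l * (u *m u^T) 0 0.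
Proof.
move=> n0 Msym.
have Ms : forall i j, M i j = M j i by move=> i j; rewrite -{1}Msym mxE.
pose f := real_complex R.
pose A := M ^ f.
have AtC : A ^t* = A.
  apply/matrixP=> i j; rewrite !mxE conj_realC.
  by rewrite Ms.
have Anorm : A \is normalmx by apply/normalmxP; rewrite AtC.
have Areal : A \is a realmx.
  by apply/mxOverP=> i j; rewrite mxE /f /= complex_real.
have Asym : A \is symmetricmx.
  apply/is_hermitianmxP; rewrite expr0 scale1r map_mx_id //.
  apply/matrixP=> i j; rewrite !mxE.
  by rewrite Ms.
have Aherm : A \is hermsymmx by exact: realsym_hermsym.
have dreal := hermitian_spectral_diag_real Aherm.
have hA := orthomx_spectralP Anorm.
set P := spectralmx A in hA; set d := spectral_diag A in hA dreal.
have Pu : P \is unitarymx by exact: spectral_unitarymx.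
rewrite invmx_unitary // in hA.
have PP : P *m P^t* = 1%:M by apply/unitarymxP.
have PtP : P^t* *m P = 1%:M by apply: mulmx1C.
have dR : forall j, d 0 j = ((complex.Re (d 0 j))%:C)%C.
  move=> j; have := mxOverP dreal 0 j.
  by case: (d 0 j) => a b; rewrite complex_real => /eqP ->.
pose i0 := Ordinal n0.
pose im := Order.arg_max i0 xpredT (fun i => complex.Re (d 0 i)).
have immax : forall j, complex.Re (d 0 j) <= complex.Re (d 0 im).
  rewrite /im; case: arg_maxP => // i _ H j; exact: H.
exists (complex.Re (d 0 im)).
  rewrite eigenvalue_root_char -(fmorph_root f) map_char_poly -/A.
  rewrite -eigenvalue_root_char; apply/eigenvalueP.
  exists (row im P).
    rewrite -row_mul hA !mulmxA PP mul1mx.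
    apply/rowP=> j; rewrite mul_diag_mx !mxE; congr (_ * _).
    by rewrite [LHS]dR.
  apply/negP=> /eqP r0.
  have := congr1 (row im) PP; rewrite row_mul r0 mul0mx.
  move/rowP/(_ im); rewrite !mxE eqxx /= => /eqP; by rewrite eq_sym oner_eq0.
move=> u.
pose uc := u ^ f.
have ucC : uc ^t* = u^T ^ f.
  by apply/matrixP=> i j; rewrite !mxE conj_realC.
pose w := uc *m P^t*.
have wC : w ^t* = P *m uc^t*.
  by rewrite /w trmx_mul map_mxM trmxCK.
have E1 : f ((u *m M *m u^T) 0 0) = (w *m diag_mx d *m w^t*) 0 0.
  transitivity (((u *m M *m u^T) ^ f) 0 0); first by rewrite [in RHS]mxE.
  rewrite !map_mxM -/uc -ucC.
  transitivity ((uc *m A *m uc^t*) 0 0); first by [].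
  by rewrite hA /w trmx_mul map_mxM trmxCK !mulmxA.
have E2 : f ((u *m u^T) 0 0) = (w *m w^t*) 0 0.
  transitivity (((u *m u^T) ^ f) 0 0); first by rewrite [in RHS]mxE.
  rewrite !map_mxM -/uc -ucC.
  by rewrite /w trmx_mul map_mxM trmxCK !mulmxA -[uc *m _ *m P]mulmxA PtP mulmx1.
suff: f ((u *m M *m u^T) 0 0) <= f (complex.Re (d 0 im)) * f ((u *m u^T) 0 0).
  by rewrite -rmorphM /f lecR.
rewrite E1 E2 !mxE mulr_sumr.
apply: ler_sum => j _; rewrite mul_mx_diag !mxE.
rewrite [d 0 j]dR -mulrA [X in _ <= X]mulrCA.
set s := \sum_(j0 < n) _.
rewrite !mulrA ![s * _]mulrC -!mulrA.
apply: ler_wpM2r; first by rewrite mul_conjC_ge0.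
by rewrite /f lecR.
Qed.

End Spec.
Lemma avg_eig (R : rcfType) N (M : 'M[R]_N) (W : {set 'I_N}) (B : R) (x : 'rV_N) (l : R) :
 M^T = M -> (forall i w w', i \notin W -> w \in W -> w' \in W -> M i w = M i w') ->
 (forall w, w \in W -> \sum_(i in W) M i w = B) ->
 (forall i j, i \in W -> j \in W -> 0 <= M i j) ->
 x != 0 -> x *m M = l *: x -> B < l ->
 let y := \row_i (if i \in W then (\sum_(i in W) x 0 i) / #|W|%:R else x 0 i) in
 y != 0 /\ y *m M = l *: y.
Proof.
move=> Msym hrow hcol hpos xn0 hx lB.
have Ms : forall i j, M i j = M j i by move=> i j; rewrite -{1}Msym mxE.
have hx' : forall j, \sum_i x 0 i * M i j = l * x 0 j.
  by move=> j; have /rowP/(_ j) := hx; rewrite !mxE.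
set S := \sum_(i in W) x 0 i.
move=> y.
split.
  apply/negP=> /eqP y0.
  have xout : forall i, i \notin W -> x 0 i = 0.
    by move=> i iW; have /rowP/(_ i) := y0; rewrite !mxE (negbTE iW).
  have [i1 xi1] : exists i, x 0 i != 0.
    apply/existsP; move: xn0; apply: contraR; rewrite negb_exists => /forallP H.
    by apply/eqP/rowP=> i; rewrite mxE; apply/eqP; rewrite -[_ == _]negbK H.
  pose js := Order.arg_max i1 xpredT (fun i => `|x 0 i|).
  have jsmax : forall i, `|x 0 i| <= `|x 0 js|.
    by rewrite /js; case: arg_maxP => // i _ H j; exact: H.
  have xjs : 0 < `|x 0 js|.
    by apply: lt_le_trans (jsmax i1); rewrite normr_gt0.
  have jsW : js \in W.
    by apply: contraT => /xout h; move: xjs; rewrite h normr0 ltxx.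
  have E : l * x 0 js = \sum_(i in W) x 0 i * M i js.
    rewrite -hx' (bigID (fun i => i \in W)) /= [X in _ + X]big1 ?addr0 //.
    by move=> i iW; rewrite xout ?mul0r.
  have : `|l| * `|x 0 js| <= B * `|x 0 js|.
    rewrite -normrM E -(hcol js jsW) mulr_suml.
    apply: le_trans (ler_norm_sum _ _ _) _.
    apply: ler_sum => i iW; rewrite normrM (ger0_norm (hpos _ _ iW jsW)) mulrC.
    by apply: ler_wpM2l; [exact: hpos | exact: jsmax].
  rewrite ler_pM2r // => hl.
  by move: (le_trans (ler_norm l) hl); rewrite leNgt lB.
apply/rowP => j; rewrite !mxE.
under eq_bigr do rewrite mxE.
rewrite (bigID (fun i => i \in W)) /=.
under eq_bigr => i iW do rewrite iW.
under [X in _ + X]eq_bigr => i iW do rewrite (negbTE iW).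
have hn : forall w, w \in W -> (#|W|%:R : R) != 0.
  by move=> w wW; rewrite pnatr_eq0 -lt0n; apply/card_gt0P; exists w.
have [jW|jW] := boolP (j \in W).
  set g := \sum_(i | i \notin W) _.
  have gc : forall j', j' \in W -> \sum_(i | i \notin W) x 0 i * M i j' = g.
    by move=> j' j'W; apply: eq_bigr => i iW; rewrite (hrow i j' j).
  have key : l * S = B * S + #|W|%:R * g.
    have : \sum_(j' in W) \sum_i x 0 i * M i j' = l * S.
      by rewrite mulr_sumr; apply: eq_bigr => j' _; rewrite hx'.
    move=> <-.
    under eq_bigr => j' j'W do rewrite (bigID (fun i => i \in W)) /= gc //.
    rewrite big_split /= sumr_const; congr (_ + _); last by rewrite mulr_natl.
    rewrite exchange_big /= mulr_sumr; apply: eq_bigr => i iW.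
    by rewrite -mulr_sumr mulrC; congr (_ * _); rewrite -(hcol i iW); apply: eq_bigr => j' _; rewrite Ms.
  rewrite -mulr_sumr hcol //.
  have -> : g = (l * S - B * S) / #|W|%:R.
    by rewrite key addrC addKr mulrC mulKf // (hn j jW).
  by field; exact: (hn j jW).
rewrite -hx' [in RHS](bigID (fun i => i \in W)) /=; congr (_ + _).
have [W0|[w wW]] := set_0Vmem W.
  by rewrite W0 !big_set0.
under eq_bigr => i iW do rewrite Ms (hrow j i w jW iW wW).
under [RHS]eq_bigr => i iW do rewrite Ms (hrow j i w jW iW wW).
rewrite -!mulr_suml sumr_const; congr (_ * _).
by rewrite -[S *+ _]mulr_natr mulfK // (hn w wW).
Qed.

Lemma sumIl (R : rcfType) (T : finType) (P : pred T) (F : T -> R) :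
  \sum_i (P i)%:R * F i = \sum_(i | P i) F i.
Proof. by rewrite [RHS]big_mkcond; apply: eq_bigr => i _; case: (P i); rewrite ?mul1r ?mul0r. Qed.

Lemma sumIr (R : rcfType) (T : finType) (P : pred T) (F : T -> R) :
  \sum_i F i * (P i)%:R = \sum_(i | P i) F i.
Proof. by rewrite [RHS]big_mkcond; apply: eq_bigr => i _; case: (P i); rewrite ?mulr1 ?mulr0. Qed.

Lemma top_lambda1 (R : rcfType) n (M : 'M[R]_n) : (0 < n)%N -> M^T = M ->
  exists l, is_lambda1 M l /\
    forall u : 'rV_n, (u *m M *m u^T) 0 0 <= l * (u *m u^T) 0 0.
Proof.
move=> n0 Msym; have [l el hl] := @top_eig _ _ M n0 Msym.
exists l; split => //; split => // y /eigenvalueP [v hv vn0].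
have := hl v; rewrite hv -scalemxAl mxE.
have vv : 0 < (v *m v^T) 0 0.
  rewrite mxE; have [i vi] : exists i, v 0 i != 0.
    apply/existsP; move: vn0; apply: contraR; rewrite negb_exists => /forallP H.
    by apply/eqP/rowP=> i; rewrite mxE; apply/eqP; rewrite -[_ == _]negbK H.
  rewrite (bigD1 i) //= mxE ltr_pwDl ?sumr_ge0 // => [|j _]; last by rewrite mxE -expr2 sqr_ge0.
  by rewrite lt_def mulf_neq0 //= -expr2 sqr_ge0.
by rewrite ler_pM2r.
Qed.

Lemma constW_mul (R : rcfType) N (M1 M2 : 'M[R]_N) (W : {set 'I_N}) (B c : R) (z : 'rV_N) :
 (forall i j, ~~ ((i \in W) && (j \in W)) -> M1 i j = M2 i j) ->
 (forall w, w \in W -> \sum_(i in W) M1 i w = B) ->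
 (forall w, w \in W -> \sum_(i in W) M2 i w = B) ->
 (forall i, i \in W -> z 0 i = c) -> z *m M1 = z *m M2.
Proof.
move=> h1 c1 c2 hz; apply/rowP => j; rewrite !mxE.
rewrite (bigID (fun i => i \in W)) [RHS](bigID (fun i => i \in W)) /=.
congr (_ + _); last by apply: eq_bigr => i iW; rewrite h1 // (negbTE iW).
have [jW|jW] := boolP (j \in W).
  under eq_bigr => i iW do rewrite hz //.
  under [RHS]eq_bigr => i iW do rewrite hz //.
  by rewrite -!mulr_sumr c1 // c2.
by apply: eq_bigr => i iW; rewrite h1 // (negbTE jW) andbF.
Qed.

Lemma abstract_main (R : rcfType) N (M1 M2 : 'M[R]_N) (W : {set 'I_N}) (B : R) (v0 w0 : 'I_N) :
  M1^T = M1 -> M2^T = M2 ->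
  (forall i j, ~~ ((i \in W) && (j \in W)) -> M1 i j = M2 i j) ->
  (forall i w w', i \notin W -> w \in W -> w' \in W -> M1 i w = M1 i w') ->
  (forall w, w \in W -> \sum_(i in W) M1 i w = B) ->
  (forall w, w \in W -> \sum_(i in W) M2 i w = B) ->
  (forall i j, i \in W -> j \in W -> 0 <= M1 i j) ->
  (forall i j, i \in W -> j \in W -> 0 <= M2 i j) ->
  v0 \notin W -> w0 \in W ->
  B < 2 * #|W|%:R * M1 v0 w0 + M1 v0 v0 ->
  exists l, is_lambda1 M1 l /\ is_lambda1 M2 l.
Proof.
move=> S1 S2 h1 hr1 c1 c2 p1 p2 v0W w0W hB.
have Ms1 : forall i j, M1 i j = M1 j i by move=> i j; rewrite -{1}S1 mxE.
have hr2 : forall i w w', i \notin W -> w \in W -> w' \in W -> M2 i w = M2 i w'.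
  move=> i w w' iW wW w'W; rewrite -!h1 ?(negbTE iW) //; exact: hr1.
have N0 : (0 < N)%N := leq_ltn_trans (leq0n _) (ltn_ord w0).
pose u := \row_i ((i \in W)%:R + (i == v0)%:R : R).
have uW : forall i, i \in W -> u 0 i = 1.
  move=> i iW; rewrite mxE iW; case: eqP => [e|_]; last by rewrite addr0.
  by move: v0W; rewrite -e iW.
have uE : u *m M1 = u *m M2 by exact: (@constW_mul _ _ M1 M2 W B 1 u h1 c1 c2 uW).
have cW : (#|W|%:R : R) = \sum_(i in W) 1 by rewrite sumr_const.
have uu : (u *m u^T) 0 0 = #|W|%:R + 1.
  rewrite mxE; under eq_bigr => j _ do rewrite !mxE.
  have E : forall j, ((j \in W)%:R + (j == v0)%:R) * ((j \in W)%:R + (j == v0)%:R)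
       = (j \in W)%:R * 1 + (j == v0)%:R * 1 :> R.
    move=> j; case: (eqVneq j v0) => [->|_]; first by rewrite (negbTE v0W); simpc.
    by case: (j \in W); rewrite /= ?(mulr1, mulr0, addr0, add0r, mul0r).
  under eq_bigr => j _ do rewrite E.
  by rewrite big_split /= !sumIl big_pred1_eq cW.
have uMu : (u *m M1 *m u^T) 0 0 = B * #|W|%:R + 2 * #|W|%:R * M1 v0 w0 + M1 v0 v0.
  have Mu : forall j, (u *m M1) 0 j = \sum_(i in W) M1 i j + M1 v0 j.
    move=> j; rewrite mxE; under eq_bigr do rewrite mxE mulrDl.
    by rewrite big_split /= !sumIl big_pred1_eq.
  rewrite mxE; under eq_bigr => j _ do rewrite [u^T j 0]mxE [u 0 j]mxE mulrDr.
  rewrite big_split /= !sumIr big_pred1_eq.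
  under eq_bigr => j jW do rewrite Mu.
  rewrite Mu big_split /=.
  under eq_bigr => j jW do rewrite c1 //.
  rewrite [X in _ + X + _ = _](eq_bigr (fun _ => M1 v0 w0)); last by move=> j jW; rewrite (hr1 v0 j w0).
  rewrite [X in _ + (X + _) = _](eq_bigr (fun _ => M1 v0 w0)); last by move=> j jW; rewrite Ms1 (hr1 v0 j w0).
  by rewrite !sumr_const -[B *+ _]mulr_natr -[M1 v0 w0 *+ _]mulr_natr; ring.
have [l1 [[e1 m1] r1]] := @top_lambda1 _ _ M1 N0 S1.
have [l2 [[e2 m2] r2]] := @top_lambda1 _ _ M2 N0 S2.
have l1B : B < l1.
  have := r1 u; rewrite uMu uu => h.
  rewrite -(ltr_pM2r (_ : 0 < #|W|%:R + 1)); last by rewrite ltr_wpDl.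
  apply: lt_le_trans h; rewrite mulrDr mulr1; move: hB; lra.
have l2B : B < l2.
  have := r2 u; rewrite -uE uMu uu => h.
  rewrite -(ltr_pM2r (_ : 0 < #|W|%:R + 1)); last by rewrite ltr_wpDl.
  apply: lt_le_trans h; rewrite mulrDr mulr1; move: hB; lra.
have h12 : forall i j, ~~ ((i \in W) && (j \in W)) -> M2 i j = M1 i j.
  by move=> i j h; rewrite h1.
suff l12 : l1 = l2.
  by exists l1; split; split => //; rewrite l12.
apply/eqP; rewrite eq_le; apply/andP; split.
  apply: m2; move/eigenvalueP: e1 => [x hx xn0].
  have [yn0 hy] := @avg_eig _ _ M1 W B x l1 S1 hr1 c1 p1 xn0 hx l1B.
  apply/eigenvalueP; eexists; last exact: yn0.
  rewrite -(@constW_mul _ _ M1 M2 W B ((\sum_(i in W) x 0 i) / #|W|%:R) _ h1 c1 c2) //.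
  by move=> i iW; rewrite mxE iW.
apply: m1; move/eigenvalueP: e2 => [x hx xn0].
have [yn0 hy] := @avg_eig _ _ M2 W B x l2 S2 hr2 c2 p2 xn0 hx l2B.
apply/eigenvalueP; eexists; last exact: yn0.
rewrite -(@constW_mul _ _ M2 M1 W B ((\sum_(i in W) x 0 i) / #|W|%:R) _ h12 c2 c1) //.
by move=> i iW; rewrite mxE iW.
Qed.
Section GS.
Set Implicit Arguments. Unset Strict Implicit.
Lemma splitL a b (j : 'I_a) : split (lshift b j) = inl j.
Proof. exact: (unsplitK (inl _ j)). Qed.
Lemma splitR a b (j : 'I_b) : split (rshift a j) = inr j.
Proof. exact: (unsplitK (inr _ j)). Qed.

Definition JG m p k (U : rel 'I_p) (H1 : rel 'I_k) :=
  join_graph (complete_graph m) (union_graph U H1).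

Section Edges.
Variables (m p k : nat) (U : rel 'I_p) (H1 : rel 'I_k).
Local Notation J := (@JG m p k U H1).
Local Notation K x := (lshift (p + k) x).
Local Notation C c := (rshift m (lshift k c)).
Local Notation H h := (rshift m (rshift p h)).

Lemma JKK x y : J (K x) (K y) = (x != y).
Proof. by rewrite /JG /join_graph !splitL. Qed.
Lemma JKC x c : J (K x) (C c) = true.
Proof. by rewrite /JG /join_graph splitL splitR. Qed.
Lemma JKH x c : J (K x) (H c) = true.
Proof. by rewrite /JG /join_graph splitL splitR. Qed.
Lemma JCK x c : J (C c) (K x) = true.
Proof. by rewrite /JG /join_graph splitL splitR. Qed.
Lemma JHK x c : J (H c) (K x) = true.
Proof. by rewrite /JG /join_graph splitL splitR. Qed.
Lemma JCC c c' : J (C c) (C c') = U c c'.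
Proof. by rewrite /JG /join_graph /union_graph !splitR !splitL. Qed.
Lemma JCH c h : J (C c) (H h) = false.
Proof. by rewrite /JG /join_graph /union_graph !splitR !splitL. Qed.
Lemma JHC c h : J (H h) (C c) = false.
Proof. by rewrite /JG /join_graph /union_graph !splitR !splitL. Qed.
Lemma JHH h h' : J (H h) (H h') = H1 h h'.
Proof. by rewrite /JG /join_graph /union_graph !splitR. Qed.

Variant vclass : 'I_(m + (p + k)) -> Type :=
 | VK x : vclass (K x) | VC c : vclass (C c) | VH h : vclass (H h).
Lemma vclassP i : vclass i.
Proof.
case: (split_ordP i) => [x ->|y ->]; first exact: VK.
by case: (split_ordP y) => [c ->|h ->]; [exact: VC|exact: VH].
Qed.

Definition W : {set 'I_(m + (p + k))} := [set i : 'I_(m + (p + k)) | (m <= i) && (i < m + p)]%N.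
Lemma KnW x : K x \notin W.
Proof. by rewrite inE /=; have := ltn_ord x; lia. Qed.
Lemma CW c : C c \in W.
Proof. by rewrite inE /=; have := ltn_ord c; lia. Qed.
Lemma HnW h : H h \notin W.
Proof. by rewrite inE /=; lia. Qed.

Lemma sumW (R : rcfType) (F : 'I_(m + (p + k)) -> R) :
  \sum_(i in W) F i = \sum_(c < p) F (C c).
Proof.
rewrite big_split_ord /= big_pred0 => [|x]; last by rewrite (negbTE (KnW x)).
rewrite add0r big_split_ord /= [X in _ + X]big_pred0 => [|h]; last by rewrite (negbTE (HnW h)).
by rewrite addr0; apply: eq_bigl => c; rewrite CW.
Qed.

Lemma sumAll (R : rcfType) (F : 'I_(m + (p + k)) -> R) :
  \sum_i F i = \sum_x F (K x) + (\sum_c F (C c) + \sum_h F (H h)).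
Proof. by rewrite big_split_ord /= big_split_ord. Qed.

End Edges.

End GS.
Lemma modS_eq n j : (j < n)%N -> (j.+1 %% n = if j.+1 == n then 0 else j.+1)%N.
Proof.
move=> jn; case: eqP => [->|ne]; first by rewrite modnn.
by rewrite modn_small //; lia.
Qed.

Lemma modP_eq n i : (0 < n)%N -> (i < n)%N ->
  ((i + n.-1) %% n = if i == 0 then n.-1 else i.-1)%N.
Proof.
move=> n0 i_n; case: eqP => [->|ne]; first by rewrite add0n modn_small //; lia.
have -> : (i + n.-1 = i.-1 + n)%N by lia.
by rewrite modnDr modn_small //; lia.
Qed.

Lemma cycle_sym n : forall i j, cycle_graph n i j = cycle_graph n j i.
Proof. by move=> i j; rewrite /cycle_graph orbC. Qed.

Lemma sum_or (R : rcfType) (T : finType) (a b : T) : a != b ->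
  \sum_j (((j == a) || (j == b))%:R : R) = 2.
Proof.
move=> ab.
have E : forall j, (((j == a) || (j == b))%:R : R) = (j == a)%:R * 1 + (j == b)%:R * 1.
  move=> j; case: (eqVneq j a) => [->|_]; last by rewrite /= !mul0r !mulr1 add0r.
  by rewrite (negbTE ab) /= !mulr1 addr0.
under eq_bigr => j _ do rewrite E.
by rewrite big_split /= !sumIl !big_pred1_eq.
Qed.

Lemma cycle_deg (R : rcfType) n (i : 'I_n) : (3 <= n)%N ->
  \sum_j ((cycle_graph n i j)%:R : R) = 2.
Proof.
move=> n3; have n0 : (0 < n)%N by lia.
pose a := Ordinal (ltn_pmod i.+1 n0).
pose b := Ordinal (ltn_pmod (i + n.-1) n0).
have ab : a != b.
  rewrite -val_eqE /= modS_eq // modP_eq //.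
  have := ltn_ord i; case: (eqVneq (nat_of_ord i).+1 n) => ?; case: (eqVneq (nat_of_ord i) 0%N) => ? ? /=; apply/eqP.
  all: rewrite -?subn1; try lia.
rewrite -(@sum_or R _ a b ab); apply: eq_bigr => j _; congr (_%:R).
rewrite /cycle_graph -!val_eqE /=; congr (_ || _).
rewrite modS_eq // modP_eq //.
have hi := ltn_ord i; have hj := ltn_ord j.
apply/idP/idP => /eqP H; apply/eqP; move: H;
 case: (eqVneq (nat_of_ord j).+1 n); case: (eqVneq (nat_of_ord i) 0%N) => /= ? ?; rewrite -?subn1; lia.
Qed.

Lemma AE (R : rcfType) n (alpha : R) (e : rel 'I_n) i j :
  A_alpha alpha e i j =
  alpha * (if i == j then \sum_l ((e i l)%:R : R) else 0) + (1 - alpha) * (e i j)%:R.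
Proof. by rewrite !mxE. Qed.

Lemma A_sym (R : rcfType) n (alpha : R) (e : rel 'I_n) :
  (forall i j, e i j = e j i) -> (A_alpha alpha e)^T = A_alpha alpha e.
Proof.
move=> es; apply/matrixP=> i j; rewrite mxE !AE es eq_sym.
by case: eqVneq => // ->.
Qed.

Lemma A_ge0 (R : rcfType) n (alpha : R) (e : rel 'I_n) i j :
  0 <= alpha -> alpha <= 1 -> 0 <= A_alpha alpha e i j.
Proof.
move=> a0 a1; rewrite AE; apply: addr_ge0; apply: mulr_ge0 => //.
- by case: eqP => _ //; apply: sumr_ge0 => l _; apply: ler0n.
- by rewrite subr_ge0.
Qed.

Section Conc.
Variables (R : rcfType) (alpha : R) (m p k : nat) (U1 U2 : rel 'I_p) (H1 : rel 'I_k).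
Hypotheses (a0 : 0 <= alpha) (a1 : alpha <= 1) (m1 : (1 <= m)%N) (p4 : (4 <= p)%N).
Hypotheses (U1s : forall i j, U1 i j = U1 j i) (U2s : forall i j, U2 i j = U2 j i)
  (H1s : forall i j, H1 i j = H1 j i).
Hypotheses (U1d : forall c, \sum_c' ((U1 c c')%:R : R) = 2)
  (U2d : forall c, \sum_c' ((U2 c c')%:R : R) = 2).

Local Notation K x := (lshift (p + k) x).
Local Notation C c := (rshift m (lshift k c)).
Local Notation H h := (rshift m (rshift p h)).

Lemma J_sym (U : rel 'I_p) : (forall i j, U i j = U j i) ->
  forall i j, @JG m p k U H1 i j = @JG m p k U H1 j i.
Proof.
move=> Us i j; case: (vclassP i) => [x|c|h]; case: (vclassP j) => [y|c'|h'];
  by rewrite ?JKK ?JKC ?JKH ?JCK ?JHK ?JCC ?JCH ?JHC ?JHH // eq_sym.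
Qed.

Lemma J_eq i j : ~~ ((i \in W m p k) && (j \in W m p k)) ->
  @JG m p k U1 H1 i j = @JG m p k U2 H1 i j.
Proof.
case: (vclassP i) => [x|c|h]; case: (vclassP j) => [y|c'|h'];
  move=> hn; rewrite ?JKK ?JKC ?JKH ?JCK ?JHK ?JCC ?JCH ?JHC ?JHH //; by rewrite !CW in hn.
Qed.

Lemma deg_C (U : rel 'I_p) : (forall c, \sum_c' ((U c c')%:R : R) = 2) ->
  forall c, \sum_l ((@JG m p k U H1 (C c) l)%:R : R) = (m + 2)%:R.
Proof.
move=> Ud c; rewrite sumAll.
under eq_bigr do rewrite JCK.
under [X in _ + (X + _)]eq_bigr do rewrite JCC.
under [X in _ + (_ + X)]eq_bigr do rewrite JCH.
by rewrite Ud sumr_const card_ord [X in _ + (_ + X)]big1 // addr0 natrD.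
Qed.

Lemma colW (U : rel 'I_p) : (forall i j, U i j = U j i) ->
  (forall c, \sum_c' ((U c c')%:R : R) = 2) ->
  forall w, w \in W m p k ->
  \sum_(i in W m p k) A_alpha alpha (@JG m p k U H1) i w = alpha * (m + 2)%:R + (1 - alpha) * 2.
Proof.
move=> Us Ud w; case: (vclassP w) => [x|c|h] hw;
  [by move: hw; rewrite inE /=; have := ltn_ord x; lia| |by move: hw; rewrite inE /=; lia].
under eq_bigr do rewrite AE.
rewrite big_split /= -!mulr_sumr; congr (_ * _ + _ * _).
  rewrite (bigD1 (C c)) ?CW //= eqxx (@deg_C U Ud c) [X in _ + X]big1 ?addr0 //.
  by move=> i /andP [_ /negbTE ->].
rewrite sumW -(Ud c); apply: eq_bigr => c' _; by rewrite JCC Us.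
Qed.


Lemma sum_neq (x0 : 'I_m) : \sum_x (((x0 != x) : bool)%:R : R) = (m.-1)%:R.
Proof.
rewrite (bigD1 x0) //= eqxx add0r.
rewrite (eq_bigr (fun _ => 1)) => [|x hx]; last by rewrite eq_sym hx.
by rewrite sumr_const cardC1 card_ord.
Qed.

Lemma conc_main :
  exists l, is_lambda1 (A_alpha alpha (@JG m p k U1 H1)) l /\
            is_lambda1 (A_alpha alpha (@JG m p k U2 H1)) l.
Proof.
have m0 : (0 < m)%N by [].
have p0 : (0 < p)%N by lia.
pose x0 := Ordinal m0.
pose c0 := Ordinal p0.
apply: (@abstract_main R _ _ _ (W m p k) (alpha * (m + 2)%:R + (1 - alpha) * 2) (K x0) (C c0)).
- by apply: A_sym; apply: J_sym.
- by apply: A_sym; apply: J_sym.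
- move=> i j hij; rewrite !AE J_eq //; congr (_ * _ + _).
  case: eqVneq => // eij; subst j; apply: eq_bigr => l _; rewrite J_eq //.
  by move: hij; rewrite andbb => /negbTE ->.
- move=> i w w' iW wW w'W; rewrite !AE.
  have [e|_] := eqVneq i w; first by move: iW; rewrite e wW.
  have [e|_] := eqVneq i w'; first by move: iW; rewrite e w'W.
  congr (_ + _ * _%:R).
  case: (vclassP i) iW => [x|c|h] iW; last 2 first.
  + by rewrite CW in iW.
  + case: (vclassP w) wW => [y|c|h'] wW; rewrite ?JHK ?JHC ?JHH;
      try by move: wW; rewrite inE /=; (try have := ltn_ord y); lia.
    case: (vclassP w') w'W => [y|c'|h''] w'W; rewrite ?JHK ?JHC ?JHH //;
      by move: w'W; rewrite inE /=; (try have := ltn_ord y); lia.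
  case: (vclassP w) wW => [y|c|h'] wW; rewrite ?JKK ?JKC ?JKH;
    try by move: wW; rewrite inE /=; (try have := ltn_ord y); lia.
  case: (vclassP w') w'W => [y|c'|h''] w'W; rewrite ?JKK ?JKC ?JKH //;
    by move: w'W; rewrite inE /=; (try have := ltn_ord y); lia.
- exact: colW.
- exact: colW.
- by move=> *; apply: A_ge0.
- by move=> *; apply: A_ge0.
- by rewrite inE /=; lia.
- exact: CW.
have cardW : (#|W m p k|%:R : R) = p%:R.
  by rewrite -sumr_const (sumW (fun _ => (1 : R))) sumr_const card_ord.
rewrite cardW !AE.
have -> : (K x0 == C c0) = false by rewrite eq_lrshift.
have deg0 : \sum_l ((@JG m p k U1 H1 (K x0) l)%:R : R) = (m.-1)%:R + (p%:R + k%:R).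
  rewrite sumAll; under eq_bigr do rewrite JKK.
  rewrite sum_neq; congr (_ + (_ + _)).
    by rewrite (eq_bigr (fun _ => 1)) => [|c _]; rewrite ?JKC // sumr_const card_ord.
  by rewrite (eq_bigr (fun _ => 1)) => [|c _]; rewrite ?JKH // sumr_const card_ord.
rewrite eqxx JKC JKK eqxx /= deg0.
have mE : (m%:R : R) = (m.-1)%:R + 1 by rewrite -[in LHS](prednK m0) -addn1 natrD.
have pp : (4%:R : R) <= p%:R by rewrite ler_nat.
have mm : (0 : R) <= (m.-1)%:R by [].
have kk : (0 : R) <= k%:R by [].
rewrite !natrD mE.
have h1 : 0 <= (1 - alpha) * (p%:R - 4%:R) by apply: mulr_ge0; rewrite subr_ge0.
have h3 : 0 <= alpha * k%:R by apply: mulr_ge0.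
rewrite -subr_gt0.
have -> : 2 * p%:R * (alpha * 0 + (1 - alpha) * 1) +
  (alpha * ((m.-1)%:R + (p%:R + k%:R)) + (1 - alpha) * 0) -
  (alpha * ((m.-1)%:R + 1 + 2) + (1 - alpha) * 2) =
  (6 - 5 * alpha) + ((1 - alpha) * (p%:R - 4%:R) + (p%:R - 4%:R) + alpha * k%:R) by ring.
have h5 : 0 < 6 - 5 * alpha by move: a1 a0; lra.
have h6 : (0 : R) <= p%:R - 4%:R by rewrite subr_ge0.
apply: lt_le_trans h5 _; rewrite lerDl.
by apply: addr_ge0 => //; apply: addr_ge0.

Qed.

End Conc.

Lemma union_sym a b (e1 : rel 'I_a) (e2 : rel 'I_b) :
  (forall i j, e1 i j = e1 j i) -> (forall i j, e2 i j = e2 j i) ->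
  forall i j, union_graph e1 e2 i j = union_graph e1 e2 j i.
Proof.
move=> s1 s2 i j; rewrite /union_graph.
by case: (split i) => x; case: (split j) => y.
Qed.

Lemma union_deg (R : rcfType) a b (e1 : rel 'I_a) (e2 : rel 'I_b) :
  (forall c, \sum_c' ((e1 c c')%:R : R) = 2) ->
  (forall c, \sum_c' ((e2 c c')%:R : R) = 2) ->
  forall c, \sum_c' ((union_graph e1 e2 c c')%:R : R) = 2.
Proof.
move=> d1 d2 c; rewrite big_split_ord /=.
case: (split_ordP c) => [x ->|y ->].
  rewrite -[RHS](d1 x) [X in _ + X]big1 ?addr0.
    by apply: eq_bigr => z _; rewrite /union_graph !splitL.
  by move=> z _; rewrite /union_graph splitL splitR.
rewrite -[RHS](d2 y) big1 ?add0r.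
  by apply: eq_bigr => z _; rewrite /union_graph !splitR.
by move=> z _; rewrite /union_graph splitL splitR.
Qed.

Theorem mainTheorem17 (R : rcfType) (alpha : R) (m n1 n2 k : nat)
    (H1 : rel 'I_k) :
  0 <= alpha -> alpha <= 1 ->
  (1 <= m)%N -> (3 <= n1)%N -> (3 <= n2)%N ->
  simple_graph H1 ->
  let H' := union_graph (union_graph (cycle_graph n1) (cycle_graph n2)) H1 in
  let H'' := union_graph (cycle_graph (n1 + n2)) H1 in
  exists lam : R,
    is_lambda1 (A_alpha alpha (join_graph (complete_graph m) H')) lam /\
    is_lambda1 (A_alpha alpha (join_graph (complete_graph m) H'')) lam.
Proof.
move=> a0 a1 m1 n13 n23 [H1s _] H' H''.
have p4 : (4 <= n1 + n2)%N by lia.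
have p3 : (3 <= n1 + n2)%N by lia.
exact: (@conc_main R alpha m (n1 + n2) k
  (union_graph (cycle_graph n1) (cycle_graph n2)) (cycle_graph (n1 + n2)) H1
  a0 a1 m1 p4
  (union_sym (@cycle_sym n1) (@cycle_sym n2)) (@cycle_sym (n1 + n2)) H1s
  (union_deg (fun c => @cycle_deg R n1 c n13) (fun c => @cycle_deg R n2 c n23))
  (fun c => @cycle_deg R (n1 + n2) c p3)).
Qed.
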